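(* Fix a formula $A$ and an annotated unary context $\Gamma\{-\}$. If $\vdash^A \Gamma\{\Diamond A^\perp_\emptyset\}$, then $\vdash^A \Gamma\{\}$.
   Context: Formulas: over a countable set of atoms $\alpha$ with duals $\alpha^\perp$, $A,B ::= \alpha \mid \alpha^\perp \mid A\land B \mid A\lor B \mid \Box A \mid \Diamond A$; negation $A^\perp$ by De Morgan duality ($(\alpha)^\perp=\alpha^\perp$, $(\alpha^\perp)^\perp=\alpha$, $\land/\lor$ dual, $(\Box A)^\perp=\Diamond A^\perp$, $(\Diamond A)^\perp=\Box A^\perp$). Annotated sequents: $\Gamma,\Delta ::= \cdot \mid \Gamma, C \mid \Gamma, \Diamond A_\Sigma \mid \Gamma,[\Delta]_B$, where $C$ is a formula not of the form $\Diamond A$, $\Sigma$ is a finite set of formulas (annotation set) and $B$ a formula (bracket annotation); sequents are taken up to exchange. Annotated unary contexts $\Gamma\{-\}$ (one hole) are defined analogously, $\Gamma\{\Delta\}$ is hole-filling, $\Gamma\{\}=\Gamma\{\cdot\}$. Annotated rules (whenever an active formula in a premise is a $\Diamond$-formula, its annotation is simply discarded): (id) $\Gamma\{\alpha^\perp,\alpha\}$, provided every $\Diamond$-formula occurrence in it has annotation $\emptyset$; ($\land$) from $\Gamma_1\{A\}$ and $\Gamma_2\{B\}$ infer $\Gamma\{A\land B\}$; ($\lor$) from $\Gamma\{A,B\}$ infer $\Gamma\{A\lor B\}$; ($\Box$) from $\Gamma\{[\Diamond A^\perp_\Sigma, A]_A\}$ infer $\Gamma\{\Box A\}$; ($\Diamond$)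 from $\Gamma\{\Delta\{[\Delta',A]_B\},\Diamond A_\Sigma\}$ infer $\Gamma\{\Delta\{[\Delta']_B\},\Diamond A_{\Sigma\cup\{B\}}\}$ (for any unary context $\Delta\{-\}$, possibly of depth $0$); (cut) from $\Gamma_1\{A\}$ and $\Gamma_2\{A^\perp\}$ infer $\Gamma\{\}$. In the two-premise rules, $\Gamma_1\{-\},\Gamma_2\{-\},\Gamma\{-\}$ are identical except for annotation sets of $\Diamond$-formula occurrences (bracket annotations coincide), and each $\Diamond$-formula occurrence in $\Gamma\{-\}$ has as annotation the union of the annotations of the corresponding occurrences in $\Gamma_1,\Gamma_2$. Fix a formula $A$; $\vdash^A\Gamma$ means the annotated sequent $\Gamma$ is derivable with the annotated rules (id), ($\land$), ($\lor$), ($\Box$), ($\Diamond$) together with those instances of (cut) whose cut formula is $A$. Convention: annotations not displayed in a statement (on $\Diamond$-formulas or brackets) are arbitrary; bracket annotations are the same in hypothesis and conclusion, while undisplayed $\Diamond$-annotations in the conclusion are existentially quantified. *)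

(* Defs.v *)
From HB Require Import structures.
From mathcomp Require Import all_boot.
From mathcomp Require Import finmap.
Set Implicit Arguments. Unset Strict Implicit. Unset Printing Implicit Defensive.
Local Open Scope fset_scope.

Inductive formula : Type :=
| Atom of nat
| NAtom of nat
| And of formula & formula
| Or of formula & formula
| Box of formula
| Dia of formula.

Fixpoint dual (A : formula) : formula :=
  match A with
  | Atom a => NAtom a
  | NAtom a => Atom a
  | And A B => Or (dual A) (dual B)
  | Or A B => And (dual A) (dual B)
  | Box A => Dia (dual A)
  | Dia A => Box (dual A)
  end.

Fixpoint formula_enc (A : formula) : GenTree.tree nat :=
  match A with
  | Atom a => GenTree.Node 0 [:: GenTree.Leaf a]
  | NAtom a => GenTree.Node 1 [:: GenTree.Leaf a]
  | And A B => GenTree.Node 2 [:: formula_enc A; formula_enc B]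
  | Or A B => GenTree.Node 3 [:: formula_enc A; formula_enc B]
  | Box A => GenTree.Node 4 [:: formula_enc A]
  | Dia A => GenTree.Node 5 [:: formula_enc A]
  end.

Fixpoint formula_dec (t : GenTree.tree nat) : option formula :=
  match t with
  | GenTree.Node 0 [:: GenTree.Leaf a] => Some (Atom a)
  | GenTree.Node 1 [:: GenTree.Leaf a] => Some (NAtom a)
  | GenTree.Node 2 [:: t1; t2] =>
      match formula_dec t1, formula_dec t2 with
      | Some A, Some B => Some (And A B) | _, _ => None end
  | GenTree.Node 3 [:: t1; t2] =>
      match formula_dec t1, formula_dec t2 with
      | Some A, Some B => Some (Or A B) | _, _ => None end
  | GenTree.Node 4 [:: t1] =>
      match formula_dec t1 with Some A => Some (Box A) | None => None end
  | GenTree.Node 5 [:: t1] =>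
      match formula_dec t1 with Some A => Some (Dia A) | None => None end
  | _ => None
  end.

Lemma formula_encK : pcancel formula_enc formula_dec.
Proof. by elim=> //= [A -> B -> | A -> B -> | A -> | A ->]. Qed.

HB.instance Definition _ := Countable.copy formula (pcan_type formula_encK).

(* A sequent is a list of items, taken up to (deep)
   exchange, see [eqv_seq] below.
   - [IForm C]     : a formula C (intended: C not of the form Dia _)
   - [IDia A S]    : the Diamond formula  Dia A  with annotation set S
   - [IBr D B]     : a bracket [D]_B with bracket annotation B *)
Inductive item : Type :=
| IForm of formula
| IDia of formula & {fset formula}
| IBr of list item & formula.

Definition sequent := list item.

(* Annotated unary contexts (exactly one hole), listed up to exchange:
   [CHole G]{D}     = G, D
   [CBr G c B]{D}   = G, [ c{D} ]_B *)
Inductive ctx : Type :=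
| CHole of sequent
| CBr of sequent & ctx & formula.

Fixpoint plug (c : ctx) (D : sequent) : sequent :=
  match c with
  | CHole G => G ++ D
  | CBr G c' B => G ++ [:: IBr (plug c' D) B]
  end.

(* The item for a formula A occurring (as active formula) in a premise;
   if A is a Diamond formula, its annotation Sg is arbitrary. *)
Definition fitem (A : formula) (Sg : {fset formula}) : item :=
  match A with
  | Dia X => IDia X Sg
  | _ => IForm A
  end.

Inductive eqv_seq : sequent -> sequent -> Prop :=
| eqv_nil : eqv_seq [::] [::]
| eqv_skip x y l l' : eqv_item x y -> eqv_seq l l' -> eqv_seq (x :: l) (y :: l')
| eqv_swap x y l : eqv_seq (x :: y :: l) (y :: x :: l)
| eqv_trans l1 l2 l3 : eqv_seq l1 l2 -> eqv_seq l2 l3 -> eqv_seq l1 l3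
with eqv_item : item -> item -> Prop :=
| eqvi_form C : eqv_item (IForm C) (IForm C)
| eqvi_dia A Sg : eqv_item (IDia A Sg) (IDia A Sg)
| eqvi_br D D' B : eqv_seq D D' -> eqv_item (IBr D B) (IBr D' B).

(* merge_* G1 G2 G : G1, G2, G are identical except for the annotation
   sets of Diamond occurrences, and each annotation in G is the union of
   the corresponding ones in G1 and G2. *)
Inductive merge_seq : sequent -> sequent -> sequent -> Prop :=
| merge_nil : merge_seq [::] [::] [::]
| merge_cons x1 x2 x l1 l2 l :
    merge_item x1 x2 x -> merge_seq l1 l2 l -> merge_seq (x1 :: l1) (x2 :: l2) (x :: l)
with merge_item : item -> item -> item -> Prop :=
| mergei_form C : merge_item (IForm C) (IForm C) (IForm C)
| mergei_dia A Sg1 Sg2 : merge_item (IDia A Sg1) (IDia A Sg2) (IDia A (Sg1 `|` Sg2))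
| mergei_br D1 D2 D B : merge_seq D1 D2 D -> merge_item (IBr D1 B) (IBr D2 B) (IBr D B).

Inductive merge_ctx : ctx -> ctx -> ctx -> Prop :=
| mergec_hole G1 G2 G : merge_seq G1 G2 G -> merge_ctx (CHole G1) (CHole G2) (CHole G)
| mergec_br G1 G2 G c1 c2 c B :
    merge_seq G1 G2 G -> merge_ctx c1 c2 c -> merge_ctx (CBr G1 c1 B) (CBr G2 c2 B) (CBr G c B).

Inductive similar_seq : sequent -> sequent -> Prop :=
| sim_nil : similar_seq [::] [::]
| sim_cons x y l l' : similar_item x y -> similar_seq l l' -> similar_seq (x :: l) (y :: l')
with similar_item : item -> item -> Prop :=
| simi_form C : similar_item (IForm C) (IForm C)
| simi_dia A Sg1 Sg2 : similar_item (IDia A Sg1) (IDia A Sg2)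
| simi_br D D' B : similar_seq D D' -> similar_item (IBr D B) (IBr D' B).

Inductive similar_ctx : ctx -> ctx -> Prop :=
| simc_hole G G' : similar_seq G G' -> similar_ctx (CHole G) (CHole G')
| simc_br G G' c c' B :
    similar_seq G G' -> similar_ctx c c' -> similar_ctx (CBr G c B) (CBr G' c' B).

Definition is_dia (A : formula) : bool := if A is Dia _ then true else false.

(* Well-formedness plus "every Diamond occurrence has annotation empty",
   the side condition of (id).  Well-formedness: items [IForm C] never carry
   a Diamond formula. *)
Fixpoint id_ok_item (x : item) : bool :=
  match x with
  | IForm C => ~~ is_dia C
  | IDia _ Sg => Sg == fset0
  | IBr D _ => all id_ok_item D
  end.
Definition id_ok (G : sequent) : bool := all id_ok_item G.

(* provable A0 G  :  |-^{A0} G  (annotated rules, cuts only on A0). *)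
Inductive provable (A0 : formula) : sequent -> Prop :=
| r_exch G G' : eqv_seq G G' -> provable A0 G -> provable A0 G'
| r_id (c : ctx) (a : nat) :
    id_ok (plug c [:: IForm (NAtom a); IForm (Atom a)]) ->
    provable A0 (plug c [:: IForm (NAtom a); IForm (Atom a)])
| r_and c1 c2 c A B Sg1 Sg2 :
    merge_ctx c1 c2 c ->
    provable A0 (plug c1 [:: fitem A Sg1]) ->
    provable A0 (plug c2 [:: fitem B Sg2]) ->
    provable A0 (plug c [:: IForm (And A B)])
| r_or c A B Sg1 Sg2 :
    provable A0 (plug c [:: fitem A Sg1; fitem B Sg2]) ->
    provable A0 (plug c [:: IForm (Or A B)])
| r_box c A Sg Sg' :
    provable A0 (plug c [:: IBr [:: IDia (dual A) Sg; fitem A Sg'] A]) ->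
    provable A0 (plug c [:: IForm (Box A)])
| r_dia c (d : ctx) D' A B Sg Sg' :
    provable A0 (plug c (plug d [:: IBr (D' ++ [:: fitem A Sg']) B] ++ [:: IDia A Sg])) ->
    provable A0 (plug c (plug d [:: IBr D' B] ++ [:: IDia A (Sg `|` [fset B])]))
| r_cut c1 c2 c Sg1 Sg2 :
    merge_ctx c1 c2 c ->
    provable A0 (plug c1 [:: fitem A0 Sg1]) ->
    provable A0 (plug c2 [:: fitem (dual A0) Sg2]) ->
    provable A0 (plug c [::]).

(* Main.v *)
Require Import Defs.
From mathcomp Require Import all_boot finmap.
Local Open Scope fset_scope.


Section Del.
Variable X : formula.

Inductive del : sequent -> sequent -> Prop :=
| del_here l : del (IDia X fset0 :: l) l
| del_skip x l l' : del l l' -> del (x :: l) (x :: l')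
| del_in D D' B l : del D D' -> del (IBr D B :: l) (IBr D' B :: l).

Inductive del_ctx : ctx -> ctx -> Prop :=
| dc_hole G G' : del G G' -> del_ctx (CHole G) (CHole G')
| dc_brG G G' c B : del G G' -> del_ctx (CBr G c B) (CBr G' c B)
| dc_in G c c' B : del_ctx c c' -> del_ctx (CBr G c B) (CBr G c' B).

Lemma del_nil {T} : del [::] T -> False.
Proof. by move=> H; inversion H. Qed.

Lemma del_app_l l l' m : del l l' -> del (l ++ m) (l' ++ m).
Proof. elim=> /= *; by constructor. Qed.

Lemma del_app_r l m m' : del m m' -> del (l ++ m) (l ++ m').
Proof. elim: l => //= x l IH H; constructor; exact: IH. Qed.

Lemma del_app {l m T} : del (l ++ m) T ->
  (exists l', del l l' /\ T = l' ++ m) \/ (exists m', del m m' /\ T = l ++ m').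
Proof.
elim: l T => [|x l IH] T /= H; first by right; exists T.
inversion H; subst.
- left; exists l; split => //; constructor.
- match goal with h : del _ _ |- _ => case: (IH _ h) end => [[l1 [H2 ->]]|[m1 [H2 ->]]].
  + left; exists (x :: l1); split => //; by constructor.
  + right; exists m1; split => //.
- left; exists (IBr D' B :: l); split => //; by constructor.
Qed.

Lemma del_ctx_plug {c cT} D : del_ctx c cT -> del (plug c D) (plug cT D).
Proof.
elim=> /= [G G' H|G G' c' B H|G c1 c2 B H IH].
- exact: del_app_l.
- exact: del_app_l.
- apply: del_app_r; by constructor.
Qed.

Lemma del_plug_in c {D D'} : del D D' -> del (plug c D) (plug c D').
Proof.
move=> H; elim: c => /= [G|G c IH B].
- exact: del_app_r.
- apply: del_app_r; by constructor.
Qed.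

Lemma del_plug {c al T} : del (plug c al) T ->
  (exists cT, del_ctx c cT /\ T = plug cT al) \/
  (exists al', del al al' /\ T = plug c al').
Proof.
elim: c T => [G|G c IH B] T /= H.
- case: (del_app H) => [[l' [H1 ->]]|[m' [H1 ->]]].
  + left; exists (CHole l'); split => //; by constructor.
  + right; exists m'; by split.
- case: (del_app H) => [[l' [H1 ->]]|[m' [H1 ->]]].
  + left; exists (CBr l' c B); split => //; by constructor.
  + inversion H1; subst; first by case: (del_nil H4).
    match goal with h : del (plug _ _) _ |- _ => case: (IH _ h) end => [[cT [H2 ->]]|[a [H2 ->]]].
    * left; exists (CBr G cT B); split => //; by constructor.
    * right; exists a; by split.
Qed.

Lemma id_ok_del {S T} : del S T -> id_ok S -> id_ok T.
Proof.
rewrite /id_ok; elim=> /= [l|x l l' _ IH|D D' B l _ IH].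
- by move=> //; case/andP.
- by case/andP=> -> /IH.
- by case/andP=> /IH -> ->.
Qed.

Lemma merge_del_seq {l lT} : del l lT -> forall l1 l2, merge_seq l1 l2 l ->
  exists l1T l2T, del l1 l1T /\ del l2 l2T /\ merge_seq l1T l2T lT.
Proof.
elim=> [m|x m m' _ IH|D D' B m _ IH] l1 l2 H; inversion H; subst.
- match goal with h : merge_item _ _ _ |- _ => inversion h; subst end.
  match goal with h : _ `|` _ = fset0 |- _ =>
    have /eqP := h; rewrite fsetU_eq0 => /andP [/eqP E1 /eqP E2]; subst end.
  exists l0, l3; split; first exact: del_here.
  split; first exact: del_here. done.
- match goal with h : merge_seq _ _ _ |- _ => case: (IH _ _ h) end.
  move=> a [b [Ha [Hb Hm]]].
  exists (x1 :: a), (x2 :: b); do !split; by constructor.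
- match goal with h : merge_item _ _ _ |- _ => inversion h; subst end.
  match goal with h : merge_seq _ _ D |- _ => case: (IH _ _ h) end.
  move=> a [b [Ha [Hb Hm]]].
  eexists; eexists; do !split; do ?constructor; eassumption.
Qed.

Lemma merge_del_ctx {c cT} : del_ctx c cT -> forall c1 c2, merge_ctx c1 c2 c ->
  exists c1T c2T, del_ctx c1 c1T /\ del_ctx c2 c2T /\ merge_ctx c1T c2T cT.
Proof.
elim=> [G G' H|G G' c' B H|G c1 c2 B H IH] d1 d2 M; inversion M; subst.
- match goal with h : merge_seq _ _ _ |- _ => case: (merge_del_seq H _ _ h) end.
  move=> a [b [Ha [Hb Hm]]].
  eexists; eexists; do !split; do ?constructor; eassumption.
- match goal with h : merge_seq _ _ _ |- _ => case: (merge_del_seq H _ _ h) end.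
  move=> a [b [Ha [Hb Hm]]].
  eexists; eexists; do !split; do ?constructor; eassumption.
- match goal with h : merge_ctx _ _ _ |- _ => case: (IH _ _ h) end.
  move=> a [b [Ha [Hb Hm]]].
  eexists; eexists; do !split; do ?constructor; eassumption.
Qed.


Fixpoint eqv_item_refl (x : item) : eqv_item x x :=
  match x with
  | IForm C => eqvi_form C
  | IDia A Sg => eqvi_dia A Sg
  | IBr D B => @eqvi_br D D B ((fix f (l : list item) : eqv_seq l l :=
       match l with
       | [::] => eqv_nil
       | y :: l' => @eqv_skip y y l' l' (eqv_item_refl y) (f l')
       end) D)
  end.

Lemma eqv_refl l : eqv_seq l l.
Proof. elim: l => [|x l IH]; [exact: eqv_nil | exact: eqv_skip (eqv_item_refl x) IH]. Qed.

Scheme eqv_seq_mut := Induction for eqv_seq Sort Prop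
  with eqv_item_mut := Induction for eqv_item Sort Prop.

Lemma eqv_del {S S2} : eqv_seq S S2 -> forall T, del S2 T ->
  exists T0, del S T0 /\ eqv_seq T0 T.
Proof.
move=> H.
apply: (eqv_seq_mut
  (fun l l' _ => forall T, del l' T -> exists T0, del l T0 /\ eqv_seq T0 T)
  (fun x y _ => forall D' B D1, y = IBr D' B -> del D' D1 ->
      exists D D0, x = IBr D B /\ del D D0 /\ eqv_seq D0 D1)) H => {S S2}.
- by move=> T /del_nil.
- move=> x y l l' Hxy IHxy Hl IHl T HT; inversion HT; subst.
  + inversion Hxy; subst. exists l; split; [exact: del_here | exact: Hl].
  + match goal with h : del l' _ |- _ => case: (IHl _ h) end => T0 [H3 H4].
    exists (x :: T0); split; [exact: del_skip | exact: eqv_skip].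
  + match goal with h : del _ _ |- _ => case: (IHxy _ _ _ erefl h) end.
    move=> Dx [D0 [-> [H5 H6]]].
    eexists; split; first (apply: del_in; exact: H5).
    apply: eqv_skip => //; exact: eqvi_br.
- move=> x y l T HT; inversion HT; subst.
  + exists (x :: l); split; [apply: del_skip; exact: del_here | exact: eqv_refl].
  + match goal with h : del _ _ |- _ => inversion h; subst end.
    * eexists; split; [exact: del_here | exact: eqv_refl].
    * eexists; split; [do 2 apply: del_skip; eassumption | exact: eqv_swap].
    * eexists; split; [apply: del_in; eassumption | exact: eqv_swap].
  + eexists; split; [apply: del_skip; apply: del_in; eassumption | exact: eqv_swap].
- move=> l1 l2 l3 _ IH1 _ IH2 T HT.
  case: (IH2 _ HT) => T2 [H2 E2]; case: (IH1 _ H2) => T1 [H1 E1].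
  exists T1; split => //; exact: eqv_trans E1 E2.
- by [].
- by [].
- move=> D D' B HD IH D2 B2 D1 [<- <-] HD2.
  case: (IH _ HD2) => D0 [H0 E0]. by exists D, D0.
Qed.


Ltac kill := repeat match goal with
  | h : del [::] _ |- _ => by case: (del_nil h)
  | h : del (IForm _ :: _) _ |- _ => inversion h; subst; clear h
  end.

Lemma del_provable A0 S : provable A0 S -> forall T, del S T -> provable A0 T.
Proof.
elim=> {S}.
- move=> G G' E _ IH T HT.
  case: (eqv_del E _ HT) => T0 [H0 E0]. exact: r_exch E0 (IH _ H0).
- move=> c a Hok T HT.
  case: (del_plug HT) => [[cT [Hc ->]]|[al [Hal ->]]]; last by kill.
  apply: r_id. apply: id_ok_del Hok. exact: del_ctx_plug.
- move=> c1 c2 c A B Sg1 Sg2 M P1 IH1 P2 IH2 T HT.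
  case: (del_plug HT) => [[cT [Hc ->]]|[al [Hal ->]]]; last by kill.
  case: (merge_del_ctx Hc _ _ M) => c1T [c2T [H1 [H2 Hm]]].
  apply: r_and Hm (IH1 _ (del_ctx_plug _ H1)) (IH2 _ (del_ctx_plug _ H2)).
- move=> c A B Sg1 Sg2 P IH T HT.
  case: (del_plug HT) => [[cT [Hc ->]]|[al [Hal ->]]]; last by kill.
  apply: r_or; apply: IH; exact: del_ctx_plug.
- move=> c A Sg Sg' P IH T HT.
  case: (del_plug HT) => [[cT [Hc ->]]|[al [Hal ->]]]; last by kill.
  apply: r_box; apply: IH; exact: del_ctx_plug.
- move=> c d D' A B Sg Sg' P IH T HT.
  case: (del_plug HT) => [[cT [Hc ->]]|[al [Hal ->]]].
    eapply r_dia; apply: IH; exact: del_ctx_plug.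
  case: (del_app Hal) => [[l' [Hl ->]]|[m' [Hm ->]]].
  + case: (del_plug Hl) => [[dT [Hd ->]]|[g [Hg ->]]].
    * eapply r_dia; apply: IH; apply: del_plug_in; apply: del_app_l;
        exact: del_ctx_plug.
    * inversion Hg; subst; first by kill.
      eapply r_dia; apply: IH; apply: del_plug_in; apply: del_app_l;
        apply: del_plug_in; apply: del_in; apply: del_app_l; eassumption.
  + inversion Hm; subst; last by kill.
    match goal with h : fset0 = _ `|` _ |- _ =>
      have : B \in Sg `|` [fset B] by rewrite in_fsetU in_fset1 eqxx orbT end.
    by match goal with h : fset0 = _ `|` _ |- _ => rewrite -h in_fset0 end.
- move=> c1 c2 c Sg1 Sg2 M P1 IH1 P2 IH2 T HT.
  case: (del_plug HT) => [[cT [Hc ->]]|[al [Hal ->]]]; last by kill.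
  case: (merge_del_ctx Hc _ _ M) => c1T [c2T [H1 [H2 Hm]]].
  apply: r_cut Hm (IH1 _ (del_ctx_plug _ H1)) (IH2 _ (del_ctx_plug _ H2)).
Qed.

End Del.

Fixpoint sim_item_refl (x : item) : similar_item x x :=
  match x with
  | IForm C => simi_form C
  | IDia A Sg => simi_dia A Sg Sg
  | IBr D B => @simi_br D D B ((fix f (l : list item) : similar_seq l l :=
       match l with
       | [::] => sim_nil
       | y :: l' => @sim_cons y y l' l' (sim_item_refl y) (f l')
       end) D)
  end.

Lemma sim_refl l : similar_seq l l.
Proof. elim: l => [|x l IH]; [exact: sim_nil | exact: sim_cons (sim_item_refl x) IH]. Qed.

Lemma simc_refl c : similar_ctx c c.
Proof. elim: c => [G|G c IH B]; [exact: simc_hole (sim_refl G) | exact: simc_br B (sim_refl G) IH]. Qed.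

Theorem mainTheorem10 (A : formula) (G : ctx) :
  provable A (plug G [:: IDia (dual A) fset0]) ->
  exists G', similar_ctx G G' /\ provable A (plug G' [::]).
Proof.
move=> P; exists G; split; first exact: simc_refl.
apply: (@del_provable (dual A) A _ P); apply: del_plug_in; exact: del_here.
Qed.
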